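(* For all integers $n, k \geq 1$ with $n \geq k$, $$\sum_{i=k}^{n} \frac{s(n,i)\, S(i,k)}{i} = (-1)^{n-k} \frac{(n-1)!}{k!} \sum_{\ell=0}^{n-k} \frac{(-1)^{\ell}}{\ell!} B_{\ell}^*.$$
   Context: For $n \geq 0$, $X^{\underline{n}} := X(X-1)\cdots(X-n+1)$ ($X^{\underline{0}}=1$). The (signed) Stirling numbers of the first kind $s(n,k)$ are defined by $X^{\underline{n}} = \sum_{k=0}^{n} s(n,k) X^k$, and the Stirling numbers of the second kind $S(n,k)$ by $X^n = \sum_{k=0}^{n} S(n,k) X^{\underline{k}}$ (for all $n\ge 0$), with $s(n,k)=S(n,k)=0$ when $n<k$. The Bernoulli numbers of the second kind $B_n^*$ are defined by $\frac{t}{\log(1+t)} = \sum_{n \ge 0} B_n^* \frac{t^n}{n!}$. *)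

(* Defs.v *)
From mathcomp Require Import all_boot all_order all_algebra.
Set Implicit Arguments. Unset Strict Implicit. Unset Printing Implicit Defensive.
Import Order.TTheory GRing.Theory Num.Theory.
Local Open Scope ring_scope.

Definition falling_poly (n : nat) : {poly int} :=
  \prod_(i < n) ('X - (i%:Z)%:P).

(* Signed Stirling numbers of the first kind: X^{\underline n} = sum_k s(n,k) X^k.
   (Coefficients beyond degree n are 0, so s(n,k) = 0 for n < k.) *)
Definition stirling1 (n k : nat) : int := (falling_poly n)`_k.

(* Stirling numbers of the second kind, via the standard recurrence
   S(0,0)=1, S(0,k+1)=0, S(n+1,0)=0, S(n+1,k+1) = (k+1) S(n,k+1) + S(n,k),
   which is the unique family satisfying X^n = sum_k S(n,k) X^{\underline k}. *)
Fixpoint stirling2 (n k : nat) {struct n} : int :=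
  match n, k with
  | 0, 0 => 1
  | 0, _.+1 => 0
  | _.+1, 0 => 0
  | n'.+1, k'.+1 => (k'.+1)%:Z * stirling2 n' k'.+1 + stirling2 n' k'
  end.

(* Coefficients c_m of the power series log(1+t)/t = sum_m (-1)^m t^m/(m+1). *)
Definition logq_coef (m : nat) : rat := (-1) ^+ m / (m.+1)%:R.

(* Coefficients b_n of the reciprocal power series t/log(1+t) = sum_n b_n t^n,
   determined by (sum c_m t^m)(sum b_n t^n) = 1, i.e. b_0 = 1 and
   b_n = - sum_{m=1}^{n} c_m b_{n-m} (c_0 = 1). *)
Fixpoint bstar_aux (n : nat) : seq rat :=
  match n with
  | 0 => [:: 1]
  | n'.+1 =>
      let s := bstar_aux n' in
      rcons s (- \sum_(m < n'.+1) logq_coef m.+1 * nth 0 s (n' - m)%N)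
  end.

Definition bstar_coef (n : nat) : rat := nth 0 (bstar_aux n) n.

(* Bernoulli numbers of the second kind: t/log(1+t) = sum_n B*_n t^n / n!. *)
Definition bernoulli2 (n : nat) : rat := (n`!)%:R * bstar_coef n.

(* Main.v *)
Require Import Defs.
From mathcomp Require Import all_boot all_order all_algebra.
From mathcomp Require Import ring.
Import Order.TTheory GRing.Theory Num.Theory.
Local Open Scope ring_scope.
Set Implicit Arguments. Unset Strict Implicit.


Definition fp (n : nat) : {poly rat} := \prod_(i < n) ('X - (i%:R)%:P).

Lemma fpS n : fp n.+1 = fp n * ('X - (n%:R)%:P).
Proof. by rewrite /fp big_ord_recr. Qed.

Lemma fp0 : fp 0 = 1.
Proof. by rewrite /fp big_ord0. Qed.

Lemma map_falling n : map_poly (intr : int -> rat) (falling_poly n) = fp n.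
Proof.
rewrite /falling_poly /fp; elim: n => [|n IH]; first by rewrite !big_ord0 rmorph1.
rewrite !big_ord_recr rmorphM /=; congr (_ * _); first exact: IH.
by rewrite map_polyXsubC /= pmulrn.
Qed.
Lemma fp_stirling1 n i : ((stirling1 n i)%:~R : rat) = (fp n)`_i.
Proof. by rewrite /stirling1 -map_falling coef_map. Qed.

Lemma size_fp n : (size (fp n) <= n.+1)%N.
Proof.
elim: n => [|n IH]; first by rewrite fp0 size_poly1.
rewrite fpS; apply: leq_trans (size_mul_leq _ _) _.
by rewrite size_XsubC addn2 /=.
Qed.

Lemma fp_at0 n : (fp n).[0] = (n == 0%N)%:R.
Proof.
case: n => [|n]; first by rewrite fp0 hornerC.
by rewrite /fp big_ord_recl hornerM hornerXsubC /= subrr mul0r.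
Qed.

Lemma fp_atm1 m : (fp m).[-1] = (-1) ^+ m * (m`!)%:R.
Proof.
elim: m => [|m IH]; first by rewrite fp0 hornerC expr0 mul1r.
rewrite fpS hornerM hornerXsubC IH factS natrM exprS.
rewrite -natr1. ring.
Qed.

Lemma fpS_l n : fp n.+1 = 'X * (fp n \Po ('X - 1)).
Proof.
elim: n => [|n IH]; first by rewrite fpS fp0 comp_polyC !mul1r mulr1 subr0.
rewrite [LHS]fpS [in RHS]fpS IH comp_polyM comp_polyB comp_polyX comp_polyC.
rewrite -natr1 polyCD polyC1 -mulrA; congr (_ * _); congr (_ * _).
ring.
Qed.

Lemma fp_at1 n : (fp n.+2).[1] = 0.
Proof.
elim: n => [|n IH]; last by rewrite fpS hornerM IH mul0r.
by rewrite fpS hornerM hornerXsubC subrr mulr0.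
Qed.

Definition delta (p : {poly rat}) := p \Po ('X + 1) - p.

Lemma deltaD p q : delta (p + q) = delta p + delta q.
Proof. rewrite /delta comp_polyD; ring. Qed.
Lemma deltaZ a p : delta (a *: p) = a *: delta p.
Proof. by rewrite /delta comp_polyZ scalerBr. Qed.
Lemma delta0 : delta 0 = 0.
Proof. by rewrite /delta comp_poly0 subrr. Qed.

Definition ev k p := (iter k delta p).[0].

Lemma iter_deltaD k p q : iter k delta (p + q) = iter k delta p + iter k delta q.
Proof. elim: k => [|k IH] //=; by rewrite IH deltaD. Qed.
Lemma iter_deltaZ k a p : iter k delta (a *: p) = a *: iter k delta p.
Proof. elim: k => [|k IH] //=; by rewrite IH deltaZ. Qed.
Lemma iter_delta0 k : iter k delta 0 = 0.
Proof. elim: k => [|k IH] //=; by rewrite IH delta0. Qed.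

Lemma evD k p q : ev k (p + q) = ev k p + ev k q.
Proof. by rewrite /ev iter_deltaD hornerD. Qed.
Lemma evZ k a p : ev k (a *: p) = a * ev k p.
Proof. by rewrite /ev iter_deltaZ hornerZ. Qed.
Lemma ev0 k : ev k 0 = 0.
Proof. by rewrite /ev iter_delta0 horner0. Qed.

Lemma ev_sum k N (F : 'I_N -> {poly rat}) :
  ev k (\sum_(i < N) F i) = \sum_(i < N) ev k (F i).
Proof. exact: (big_morph (ev k) (evD k) (ev0 k)). Qed.

Lemma fpS_shift m : fp m.+1 \Po ('X + 1) = ('X + 1) * fp m.
Proof.
elim: m => [|m IH].
  by rewrite fpS fp0 mul1r mulr1 comp_polyB comp_polyX comp_polyC subr0.
rewrite fpS comp_polyM IH comp_polyB comp_polyX comp_polyC fpS -mulrA.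
congr (_ * (_ * _)). rewrite -natr1 polyCD polyC1 opprD addrA.
by rewrite addrAC addrK.
Qed.

Lemma delta_fpS m : delta (fp m.+1) = (m.+1)%:R *: fp m.
Proof.
rewrite /delta fpS_shift fpS -mul_polyC -natr1 polyCD polyC1; ring.
Qed.

Lemma delta_fp0 : delta (fp 0) = 0.
Proof. by rewrite fp0 /delta comp_polyC subrr. Qed.

Lemma iter_delta_fp k m : iter k delta (fp m) =
  if (k <= m)%N then (m ^_ k)%:R *: fp (m - k) else 0.
Proof.
elim: k => [|k IH]; first by rewrite ffactn0 scale1r subn0.
rewrite iterS IH; case: (leqP k m) => hkm; last first.
  by rewrite leqNgt (ltn_trans hkm) ?ltnSn // delta0.
rewrite deltaZ; case: (ltnP k m) => hk.
  rewrite -(subnSK hk) delta_fpS scalerA -natrM ffactnSr.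
  by rewrite subnSK // subnS.
have -> : k = m by apply/eqP; rewrite eqn_leq hkm hk.
by rewrite subnn delta_fp0 scaler0.
Qed.

Lemma ev_fp k m : ev k (fp m) = if k == m then (k`!)%:R else 0.
Proof.
rewrite /ev iter_delta_fp; case: (leqP k m) => hkm; last first.
  by rewrite horner0 gtn_eqF.
rewrite hornerZ fp_at0 subn_eq0; case: eqP => [->|hne].
  by rewrite leqnn ffactnn mulr1.
by rewrite leqNgt ltn_neqAle hkm andbT; move/eqP: hne => ->; rewrite mulr0.
Qed.


Lemma stirling2_0 i j : (i < j)%N -> stirling2 i j = 0.
Proof.
elim: i j => [|i IH] [|j] //= hij.
by rewrite !IH ?mulr0 ?addr0 // ltnW.
Qed.

Lemma Xfp j : 'X * fp j = fp j.+1 + j%:R *: fp j.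
Proof. rewrite fpS -mul_polyC; ring. Qed.

Lemma X_stirling i N : (i < N)%N ->
  'X^i = \sum_(j < N) ((stirling2 i j)%:~R : rat) *: fp j.
Proof.
elim: i N => [|i IH] [|N] // hN.
  rewrite big_ord_recl /= big1 ?addr0 ?fp0 ?expr0 ?scale1r // => j _.
  by rewrite scale0r.
rewrite exprS (IH N hN) mulr_sumr.
under eq_bigr => j _ do rewrite -scalerAr Xfp scalerDr.
rewrite big_split /= big_ord_recl /= scale0r add0r.
under [X in _ = X]eq_bigr => j _ do
  rewrite intrD intrM scalerDl -pmulrn -scalerA.
rewrite big_split /= addrC; congr (_ + _).
case: N hN IH => [|N] // hN IH.
rewrite big_ord_recl /= mulr0n scale0r scaler0 add0r big_ord_recr /=.
rewrite add0n stirling2_0 // scale0r scaler0 addr0.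
apply: eq_bigr => j _; rewrite /bump leq0n add1n add0n.
by rewrite scalerA mulrC -scalerA.
Qed.

Lemma ev_poly k N (G : {poly rat}) : (k < N)%N ->
  (forall i, (N <= i)%N -> G`_i = 0) ->
  ev k G = (k`!)%:R * \sum_(i < N) G`_i * (stirling2 i k)%:~R.
Proof.
move=> hk hG.
have HG : G = \sum_(i < N) G`_i *: 'X^i.
  rewrite -poly_def; apply/polyP => i; rewrite coef_poly.
  by case: ltnP => // /hG ->.
rewrite [in LHS]HG ev_sum mulr_sumr; apply: eq_bigr => i _.
rewrite evZ (X_stirling (ltn_ord i)) ev_sum.
rewrite (bigD1 (Ordinal hk)) //= big1 => [|j hj]; last first.
  rewrite evZ ev_fp; case: eqP => [hkj|]; last by rewrite mulr0.
  by move: hj; rewrite -val_eqE /= hkj eqxx.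
rewrite addr0 evZ ev_fp eqxx; ring.
Qed.


Definition A (p : {poly rat}) : {poly rat} :=
  \poly_(i < (size p).+1) (if i is j.+1 then p`_j / (j.+1)%:R else 0).

Lemma coefA0 p : (A p)`_0 = 0.
Proof. by rewrite coef_poly. Qed.

Lemma coefAS p j : (A p)`_j.+1 = p`_j / (j.+1)%:R.
Proof.
rewrite coef_poly ltnS; case: leqP => // h.
by rewrite nth_default // mul0r.
Qed.

Lemma natS_neq0 j : ((j.+1)%:R : rat) != 0.
Proof. by rewrite pnatr_eq0. Qed.

Lemma derivA p : (A p)^`() = p.
Proof.
apply/polyP => i; rewrite coef_deriv coefAS -[_ *+ i.+1]mulr_natr divfK //.
exact: natS_neq0.
Qed.

Lemma AD p q : A (p + q) = A p + A q.
Proof.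
apply/polyP => [[|i]]; rewrite coefD ?coefA0 ?addr0 // !coefAS coefD.
by rewrite mulrDl.
Qed.

Lemma AZ a p : A (a *: p) = a *: A p.
Proof.
apply/polyP => [[|i]]; rewrite coefZ ?coefA0 ?mulr0 // !coefAS coefZ.
by rewrite mulrA.
Qed.

Lemma A0 : A 0 = 0.
Proof. by apply/polyP => [[|i]]; rewrite coef0 ?coefA0 // coefAS coef0 mul0r. Qed.

Definition I (p : {poly rat}) : rat := (A p).[1].

Lemma ID p q : I (p + q) = I p + I q.
Proof. by rewrite /I AD hornerD. Qed.
Lemma IZ a p : I (a *: p) = a * I p.
Proof. by rewrite /I AZ hornerZ. Qed.
Lemma I0 : I 0 = 0.
Proof. by rewrite /I A0 horner0. Qed.

Lemma I_sum N (F : 'I_N -> {poly rat}) :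
  I (\sum_(i < N) F i) = \sum_(i < N) I (F i).
Proof. exact: (big_morph I ID I0). Qed.

Lemma deriv0_const (q : {poly rat}) : q^`() = 0 -> q = (q`_0)%:P.
Proof.
move=> hq; apply/polyP => [[|i]]; rewrite coefC //=.
have := congr1 (fun p : {poly rat} => p`_i) hq.
rewrite coef_deriv coef0 => /eqP; rewrite mulrn_eq0 /=.
by move/eqP.
Qed.

Lemma antideriv (q : {poly rat}) : q = A (q^`()) + (q`_0)%:P.
Proof.
have h : (q - A (q^`()))^`() = 0 by rewrite derivB derivA subrr.
have := deriv0_const h; rewrite coefB coefA0 subr0 => <-.
by rewrite addrC subrK.
Qed.

Lemma I_deriv (q : {poly rat}) : I (q^`()) = q.[1] - q.[0].
Proof.
rewrite {2}(antideriv q) hornerD hornerC horner_coef0 /I; ring.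
Qed.

Lemma A_shift p c : (A p).[c + 1] - (A p).[c] = I (p \Po ('X + c%:P)).
Proof.
have hd : (A p \Po ('X + c%:P))^`() = p \Po ('X + c%:P).
  by rewrite deriv_comp derivA derivD derivX derivC addr0 mulr1.
rewrite -hd I_deriv !horner_comp !hornerD !hornerX !hornerC add0r.
by rewrite [1 + c]addrC.
Qed.

Lemma poly_ext (p q : {poly rat}) : (forall x, p.[x] = q.[x]) -> p = q.
Proof.
move=> H; apply/eqP; rewrite -subr_eq0; apply/eqP.
apply: (@roots_geq_poly_eq0 _ _ [seq i%:R | i <- iota 0 (size (p - q))]).
- apply/allP => x /mapP [i _ ->]; by rewrite /root hornerD hornerN H subrr.
- rewrite map_inj_uniq ?iota_uniq // => a b /eqP; rewrite eqr_nat.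
  by move/eqP.
- by rewrite size_map size_iota.
Qed.

Lemma fpS_at m c : (fp m.+1).[c] = (fp m).[c] * (c - m%:R).
Proof. by rewrite fpS hornerM hornerXsubC. Qed.

Lemma fp_shift N c : fp N \Po ('X + c%:P) =
  \sum_(m < N.+1) ('C(N, m)%:R * (fp m).[c]) *: fp (N - m).
Proof.
elim: N => [|N IH].
  by rewrite big_ord1 /= fp0 comp_polyC hornerC mulr1 scale1r.
have key : forall m : 'I_N.+1, fp (N - m) * ('X + c%:P - (N%:R)%:P) =
    fp (N.+1 - m) + (c - m%:R) *: fp (N - m).
  move=> m; have hm : (m <= N)%N by rewrite -ltnS.
  rewrite subSn // fpS natrB // -mul_polyC polyCB polyCB; ring.
rewrite fpS comp_polyM IH comp_polyB comp_polyX comp_polyC mulr_suml.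
under eq_bigr => m _ do rewrite -scalerAl key scalerDr scalerA -mulrA -fpS_at.
rewrite big_split /=.
rewrite [in RHS]big_ord_recl /= bin0 subn0 fp0 hornerC mulr1 scale1r.
under [in RHS]eq_bigr => m _ do rewrite /bump leq0n add1n binS natrD mulrDl scalerDl subSS.
rewrite [in RHS]big_split /= addrA; congr (_ + _).
rewrite big_ord_recl /= bin0 subn0 fp0 hornerC mulr1 scale1r; congr (_ + _).
rewrite [in RHS]big_ord_recr /= bin_small // mul0r scale0r addr0.
apply: eq_bigr => m _; by rewrite /bump leq0n add1n subSS.
Qed.


Lemma bstar_aux_size n : size (bstar_aux n) = n.+1.
Proof. by elim: n => [|n IH] //=; rewrite size_rcons IH. Qed.

Lemma bstar_aux_nth n j : (j <= n)%N -> nth 0 (bstar_aux n) j = bstar_coef j.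
Proof.
elim: n => [|n IH]; first by rewrite leqn0 => /eqP ->.
rewrite leq_eqVlt => /orP [/eqP -> //|hj].
by rewrite /= nth_rcons bstar_aux_size hj IH.
Qed.

Lemma bstar_rec n : bstar_coef n.+1 =
  - \sum_(m < n.+1) logq_coef m.+1 * bstar_coef (n - m).
Proof.
rewrite /bstar_coef /= nth_rcons bstar_aux_size ltnn eqxx.
congr (- _); apply: eq_bigr => m _; rewrite bstar_aux_nth //.
exact: leq_subr.
Qed.

Definition dd j : rat := ((fp j)^`()).[0].

Lemma dd0 : dd 0 = 0.
Proof. by rewrite /dd fp0 derivC horner0. Qed.

Lemma ddS j : dd j.+1 = (-1) ^+ j * (j`!)%:R.
Proof.
elim: j => [|j IH].
  by rewrite /dd fpS fp0 mul1r derivXsubC hornerC expr0 mul1r.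
rewrite /dd fpS derivM derivXsubC mulr1 hornerD hornerM -/(dd j.+1) IH.
rewrite hornerXsubC fp_at0 /= addr0 factS natrM exprS; ring.
Qed.

Lemma deriv_fp N : (fp N)^`() =
  \sum_(m < N.+1) ('C(N, m)%:R * dd (N - m)) *: fp m.
Proof.
apply: poly_ext => x.
have h : (fp N \Po ('X + x%:P))^`() = (fp N)^`() \Po ('X + x%:P).
  by rewrite deriv_comp derivD derivX derivC addr0 mulr1.
have := congr1 (fun p => p.[0]) h; rewrite /= horner_comp hornerD hornerX hornerC add0r.
move=> <-; rewrite fp_shift raddf_sum /= !horner_sum; apply: eq_bigr => m _.
rewrite derivZ !hornerZ /dd; ring.
Qed.

Definition beta l : rat := I (fp l) / (l`!)%:R.

Lemma fact_neq0 l : ((l`!)%:R : rat) != 0.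
Proof. by rewrite pnatr_eq0 -lt0n fact_gt0. Qed.

Lemma I_fp l : I (fp l) = beta l * (l`!)%:R.
Proof. by rewrite /beta divfK // fact_neq0. Qed.

Lemma beta0 : beta 0 = 1.
Proof.
have := I_deriv 'X; rewrite derivX !hornerX subr0 => h.
by rewrite /beta fp0 h divr1.
Qed.

Lemma beta_rec n : beta n.+1 =
  - \sum_(m < n.+1) logq_coef m.+1 * beta (n - m).
Proof.
have H := I_deriv (fp n.+2).
rewrite fp_at1 fp_at0 /= subrr deriv_fp I_sum big_ord_recr /= subnn dd0 mulr0 scale0r I0 addr0 in H.
have H' : \sum_(m < n.+2) ((-1) ^+ (n.+1 - m) / ((n.+2 - m)%:R) * beta m) = 0.
  have : ((n.+2)`!)%:R * \sum_(m < n.+2) ((-1) ^+ (n.+1 - m) / ((n.+2 - m)%:R) * beta m) = 0.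
    rewrite mulr_sumr -[RHS]H; apply: eq_bigr => m _.
    have hm : (m <= n.+1)%N by rewrite -ltnS.
    rewrite IZ I_fp (subSn hm) ddS -(bin_fact (leqW hm)) (subSn hm) factS !natrM; field.
    by rewrite nat1r pnatr_eq0.
  by move/eqP; rewrite mulf_eq0 (negbTE (fact_neq0 _)) /= => /eqP.
rewrite big_ord_recr /= subnn expr0 subSS subSnn divr1 mul1r in H'.
apply/eqP; rewrite -subr_eq0 opprK addrC; apply/eqP; rewrite -[RHS]H'; congr (_ + _).
rewrite (reindex_inj rev_ord_inj) /=; apply: eq_bigr => m _.
have hm : (m <= n)%N by rewrite -ltnS.
rewrite subKn // /logq_coef subSS (subSn (leqW hm)) (subSn hm).
by rewrite mulrC mulrA.
Qed.

Lemma bstar_beta l : bstar_coef l = beta l.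
Proof.
elim/ltn_ind: l => -[|l] IH; first by rewrite beta0.
rewrite bstar_rec beta_rec; congr (- _); apply: eq_bigr => m _.
by rewrite IH // ltnS leq_subr.
Qed.


Lemma ev_comb k N (a : nat -> rat) : (k < N)%N ->
  ev k (\sum_(m < N) a m *: fp m) = a k * (k`!)%:R.
Proof.
move=> hk; rewrite ev_sum (bigD1 (Ordinal hk)) //= big1 => [|j hj]; last first.
  rewrite evZ ev_fp; case: eqP => [hkj|]; last by rewrite mulr0.
  by move: hj; rewrite -val_eqE /= hkj eqxx.
by rewrite addr0 evZ ev_fp eqxx.
Qed.

Lemma I_shift_m1 M : I (fp M \Po ('X - 1)) =
  (M`!)%:R * \sum_(m < M.+1) (-1) ^+ m * beta (M - m).
Proof.
rewrite -polyC1 -polyCN fp_shift I_sum mulr_sumr; apply: eq_bigr => m _.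
have hm : (m <= M)%N by rewrite -ltnS.
rewrite IZ fp_atm1 I_fp -(bin_fact hm) !natrM; ring.
Qed.

Lemma delta_G N : delta (A (fp N \Po ('X - 1))) =
  \sum_(m < N.+1) ('C(N, m)%:R * I (fp (N - m) \Po ('X - 1))) *: fp m.
Proof.
apply: poly_ext => x.
rewrite /delta hornerD hornerN horner_comp hornerD hornerX hornerC A_shift.
have e : (fp N \Po ('X - 1)) \Po ('X + x%:P) = (fp N \Po ('X + x%:P)) \Po ('X - 1).
  rewrite -!comp_polyA -polyC1 !comp_polyB !comp_polyD !comp_polyX !comp_polyC.
  congr (_ \Po _); ring.
rewrite e fp_shift raddf_sum I_sum horner_sum; apply: eq_bigr => m _ /=.
rewrite comp_polyZ IZ hornerZ; ring.
Qed.

Unset Implicit Arguments.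
Set Strict Implicit.

Theorem corollary5 (n k : nat) (hk : (1 <= k)%N) (hkn : (k <= n)%N) :
  \sum_(k <= i < n.+1) ((stirling1 n i)%:~R * (stirling2 i k)%:~R / (i%:R : rat))
  = (-1) ^+ (n - k) * ((n.-1)`!)%:R / (k`!)%:R
    * \sum_(l < (n - k).+1) ((-1) ^+ l / (l`!)%:R * bernoulli2 l).
Proof.
case: n hkn => [|N] hkn; first by move: (leq_trans hk hkn).
case: k hk hkn => [|k'] // _ hkn.
rewrite ltnS in hkn.
set G := A (fp N \Po ('X - 1)).
have g1 : forall i, G`_i = (fp N.+1)`_i / i%:R.
  move=> [|i]; first by rewrite coefA0 fpS_l coefXM /= mul0r.
  by rewrite coefAS fpS_l coefXM.
have g2 : forall i, (N.+2 <= i)%N -> G`_i = 0.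
  move=> i hi; rewrite g1 nth_default ?mul0r //.
  exact: leq_trans (size_fp _) hi.
have -> : \sum_(k'.+1 <= i < N.+2) ((stirling1 N.+1 i)%:~R * (stirling2 i k'.+1)%:~R / (i%:R : rat))
    = \sum_(0 <= i < N.+2) G`_i * (stirling2 i k'.+1)%:~R.
  have z : \sum_(0 <= i < k'.+1) G`_i * (stirling2 i k'.+1)%:~R = 0.
    rewrite big_nat_cond big1 // => i /andP [/andP [_ hi] _].
    by rewrite stirling2_0 // mulr0.
  rewrite [RHS](@big_cat_nat _ _ _ k'.+1) //=; last by rewrite ltnS ltnW.
  rewrite z add0r.
  apply: eq_bigr => i _; rewrite g1 fp_stirling1; ring.
rewrite big_mkord.
have hk2 : (k'.+1 < N.+2)%N by rewrite !ltnS.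
have hev := ev_poly hk2 g2.
have E : \sum_(i < N.+2) G`_i * (stirling2 i k'.+1)%:~R = ev k'.+1 G / ((k'.+1)`!)%:R.
  by rewrite hev [RHS]mulrC mulKf // fact_neq0.
rewrite E /ev iterSr -/(ev k' (delta G)) delta_G (@ev_comb k' N.+1 (fun m => 'C(N, m)%:R * I (fp (N - m) \Po ('X - 1)))) ?ltnS // I_shift_m1 subSS /=.
set M := (N - k')%N.
have S : \sum_(l < M.+1) (-1) ^+ l / (l`!)%:R * bernoulli2 l =
    (-1) ^+ M * \sum_(m < M.+1) (-1) ^+ m * beta (M - m).
  rewrite (reindex_inj rev_ord_inj) /= mulr_sumr; apply: eq_bigr => m _.
  have hm : (m <= M)%N by rewrite -ltnS.
  have eM : ((-1) ^+ M : rat) = (-1) ^+ m * (-1) ^+ (M - m) by rewrite -exprD subnKC.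
  rewrite subSS /bernoulli2 bstar_beta eM.
  have s2 : ((-1) ^+ m * (-1) ^+ m : rat) = 1.
    by rewrite -exprMn mulrNN mulr1 expr1n.
  have := fact_neq0 (M - m); move: ((M - m)`!)%:R => f hf.
  have -> : (-1) ^+ m * (-1) ^+ (M - m) * ((-1) ^+ m * beta (M - m)) =
     ((-1) ^+ m * (-1) ^+ m) * ((-1) ^+ (M - m) * beta (M - m)) :> rat by ring.
  by rewrite s2 mul1r; field.
rewrite S -(bin_fact hkn) -/M !natrM.
have s2 : ((-1) ^+ M * (-1) ^+ M : rat) = 1.
  by rewrite -exprMn mulrNN mulr1 expr1n.
set sM := (-1) ^+ M.
set L := (X in X = _).
transitivity ((sM * sM) * L); first by rewrite s2 mul1r.
rewrite /L; ring.
Qed.
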